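(* Let $k\in\mathbb N$ and let $G_c=(V_c,E_c)$ be a connected finite simple undirected graph with vertices $v_1,\dots,v_{n_c}$. Construct the gadget graph $G_g=(V_g,E_g)$ as follows: replace every edge of $G_c$ by a path of length $3$ (with two new internal vertices), and for every pair of distinct non-adjacent vertices of $G_c$ add a path of length $2$ between them (with one new internal vertex); all new vertices are distinct, and they are numbered $v_{n_c+1},\dots,v_{n_g}$, where $n_g=|V_g|$. Let $n=n_g+1$ and define the $n\times n$ matrix $D$ by $D_{ij}=d_{G_g}(v_i,v_j)$ for $i,j\in[n_g]$, $D_{in}=D_{ni}=2$ for $i\in[n_c]$, $D_{in}=D_{ni}=3$ for $i\in[n_g]\setminus[n_c]$, and $D_{nn}=0$. Then $G_c$ is $k$-colourable (i.e. there is $\chi:V_c\to[k]$ with $\chi(u)\ne\chi(w)$ for every edge $\{u,w\}\in E_c$) if and only if there exists a graph realisation $(G=(V,E),\Phi)$ of $D$ with $|V|\le n+k$.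
   Context: $[m]=\{1,\dots,m\}$. $d_{G_g}$ is the shortest-path distance in $G_g$. A graph realisation of an $n\times n$ matrix $D$ with non-negative integer entries is a pair $(G,\Phi)$, where $G=(V,E)$ is a finite simple undirected unweighted graph and $\Phi:[n]\to V$ is an injective map such that $d_G(\Phi(i),\Phi(j))=D_{ij}$ for all $i,j\in[n]$; here $d_G$ denotes the shortest-path distance in $G$ (equal to $\infty$ if no path exists). *)

(* Defs.v *)
From mathcomp Require Import all_boot.
Set Implicit Arguments.
Unset Strict Implicit.
Unset Printing Implicit Defensive.

Definition simple_graph (V : finType) (adj : rel V) : Prop :=
  symmetric adj /\ irreflexive adj.

Fixpoint walk_set (V : finType) (adj : rel V) (x : V) (m : nat) : {set V} :=
  match m with
  | 0 => [set x]
  | m'.+1 => [set z | [exists y in walk_set adj x m', adj y z]]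
  end.

(** A shortest walk is a path, hence has length < #|V|. *)
Definition gdist (V : finType) (adj : rel V) (x y : V) : option nat :=
  let m := find (fun m => y \in walk_set adj x m) (iota 0 #|V|) in
  if m < #|V| then Some m else None.

Definition realises (I : finType) (D : I -> I -> nat)
    (V : finType) (adj : rel V) (Phi : I -> V) : Prop :=
  simple_graph adj /\ injective Phi /\
  forall i j, gdist adj (Phi i) (Phi j) = Some (D i j).

Definition colourable (nc : nat) (e : rel 'I_nc) (k : nat) : Prop :=
  exists chi : 'I_nc -> 'I_k, forall u w, e u w -> chi u != chi w.

Definition gconnected (V : finType) (adj : rel V) : Prop :=
  forall x y : V, connect adj x y.

(** New vertices: for i < j, with {i,j} an edge, two internal vertices
    (i,j,false) (adjacent to i) and (i,j,true) (adjacent to j);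
    for i < j non-adjacent, one internal vertex (i,j,false). *)
Definition gadget_valid (nc : nat) (e : rel 'I_nc)
    (x : 'I_nc * 'I_nc * bool) : bool :=
  let: (i, j, b) := x in (i < j)%N && (e i j || ~~ b).

Definition new_vertex (nc : nat) (e : rel 'I_nc) : finType :=
  {x : 'I_nc * 'I_nc * bool | gadget_valid e x}.

Definition gadget_vertex (nc : nat) (e : rel 'I_nc) : finType :=
  ('I_nc + new_vertex e)%type.

Definition gadget_half (nc : nat) (e : rel 'I_nc)
    (x y : gadget_vertex e) : bool :=
  match x, y with
  | inl u, inr s =>
      let: (i, j, b) := val s in
      if e i j then (~~ b && (u == i)) || (b && (u == j))
      else (u == i) || (u == j)
  | inr s, inr t =>
      let: (i, j, b) := val s in
      let: (i', j', b') := val t in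
      [&& e i j, i == i', j == j', ~~ b & b']
  | _, _ => false
  end.

Definition gadget_adj (nc : nat) (e : rel 'I_nc) : rel (gadget_vertex e) :=
  fun x y => gadget_half x y || gadget_half y x.

(** The matrix D, indexed by [option (gadget_vertex e)]: [Some v] are the
    vertices of G_g, [None] is the extra index n. *)
Definition gadget_matrix (nc : nat) (e : rel 'I_nc)
    (p q : option (gadget_vertex e)) : nat :=
  match p, q with
  | Some x, Some y => odflt 0 (gdist (@gadget_adj nc e) x y)
  | Some (inl _), None | None, Some (inl _) => 2
  | Some (inr _), None | None, Some (inr _) => 3
  | None, None => 0
  end.

(* Main.v *)
Require Import Defs.
From mathcomp Require Import all_boot.
From mathcomp Require Import zify.
Set Implicit Arguments. Unset Strict Implicit. Unset Printing Implicit Defensive.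

Section Walks.
Variables (V : finType) (adj : rel V).
Local Notation ws := (walk_set adj).

Lemma ws0 x : x \in ws x 0. Proof. by rewrite /= set11. Qed.
Lemma wsS x m y z : y \in ws x m -> adj y z -> z \in ws x m.+1.
Proof. move=> Hy Hyz; rewrite /= inE; apply/existsP; exists y; by rewrite Hy. Qed.
Lemma wsSP x m z : z \in ws x m.+1 -> exists2 y, y \in ws x m & adj y z.
Proof. rewrite /= inE => /existsP [y /andP [Hy Hyz]]; by exists y. Qed.

Lemma ws_cat x y z m1 m2 : y \in ws x m1 -> z \in ws y m2 -> z \in ws x (m1 + m2).
Proof.
move=> Hy; elim: m2 z => [|m IH] z.
  by rewrite /= inE addn0 => /eqP ->.
move=> /wsSP [w Hw Hwz]; rewrite addnS; exact: wsS (IH _ Hw) Hwz.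
Qed.

Lemma ws_sym : symmetric adj -> forall m x y, y \in ws x m -> x \in ws y m.
Proof.
move=> Hs; elim=> [|m IH] x y.
  by rewrite /= !inE => /eqP ->.
move=> /wsSP [z Hz Hzy].
have Hx := IH _ _ Hz.
have Hyz1 : z \in ws y 1 by apply: (wsS (ws0 y)); rewrite Hs.
exact: (ws_cat Hyz1 Hx).
Qed.

Lemma ws_pot (f : V -> nat) x : f x = 0 -> (forall a b, adj a b -> f b <= (f a).+1) ->
  forall m y, y \in ws x m -> f y <= m.
Proof.
move=> H0 Hl; elim=> [|m IH] y.
  by rewrite /= inE => /eqP ->; rewrite H0.
move=> /wsSP [z Hz Hzy]; apply: leq_trans (Hl _ _ Hzy) _; by rewrite ltnS IH.
Qed.

Lemma gdist_ws x y d : gdist adj x y = Some d -> y \in ws x d.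
Proof.
rewrite /gdist /=; case: ifP => // Hlt [<-].
have Hh : has (fun m => y \in ws x m) (iota 0 #|V| ) by rewrite has_find size_iota.
by move: (nth_find 0 Hh); rewrite nth_iota ?add0n // -(size_iota 0 #|V|) -has_find.
Qed.

Lemma gdist_min x y d m : gdist adj x y = Some d -> y \in ws x m -> d <= m.
Proof.
rewrite /gdist /=; case: ifP => // Hlt [<-] Hm.
rewrite leqNgt; apply/negP => Hlt2.
have := before_find 0 Hlt2. rewrite nth_iota ?add0n ?Hm //.
exact: ltn_trans Hlt2 Hlt.
Qed.

Definition ball x j := [set y | [exists i : 'I_j.+1, y \in ws x i]].

Lemma ball_incl x j : ball x j \subset ball x j.+1.
Proof.
apply/subsetP => y; rewrite !inE => /existsP [i Hi]; apply/existsP.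
by exists (widen_ord (leqnSn _) i).
Qed.

Lemma ball_stab x j : ball x j.+1 \subset ball x j -> forall m, ws x m \subset ball x j.
Proof.
move=> Hsub; elim=> [|m IH]; apply/subsetP => y.
  by move=> Hy; rewrite inE; apply/existsP; exists ord0.
move=> /wsSP [z Hz Hzy].
move/subsetP: IH => /(_ _ Hz); rewrite inE => /existsP [i Hi].
apply: (subsetP Hsub); rewrite inE; apply/existsP.
have Hi2 : i.+1 < j.+2 by rewrite ltnS (ltn_ord i).
exists (Ordinal Hi2). exact: wsS Hi Hzy.
Qed.

Lemma ball_exists x : exists2 j, j < #|V| & ball x j.+1 \subset ball x j.
Proof.
case: (boolP [exists j : 'I_#|V|, ball x j.+1 \subset ball x j]).
  by move=> /existsP [j Hj]; exists j.
rewrite negb_exists => /forallP Hn.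
have Hc : forall j, j <= #|V| -> j < #|ball x j|.
  elim=> [|j IH] Hj.
    rewrite card_gt0; apply/set0Pn; exists x; rewrite inE; apply/existsP; exists ord0; exact: ws0.
  have Hj' : j < #|V| by [].
  have /= Hns := Hn (Ordinal Hj').
  apply: leq_ltn_trans (IH (ltnW Hj')) _. apply: proper_card. by rewrite properE ball_incl.
by have := Hc _ (leqnn _); rewrite ltnNge max_card.
Qed.

Lemma gdist_Some x y m : y \in ws x m -> exists d, gdist adj x y = Some d.
Proof.
move=> Hm; case: (ball_exists x) => j Hj Hsub.
have := subsetP (ball_stab Hsub m) _ Hm. rewrite inE => /existsP [i Hi].
have HiV : i < #|V| by have := ltn_ord i; lia.
have Hh : has (fun m => y \in ws x m) (iota 0 #|V|).
  by apply/hasP; exists (nat_of_ord i) => //; rewrite mem_iota /= add0n.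
move: Hh; rewrite has_find size_iota => Hh.
by rewrite /gdist /= Hh; eexists.
Qed.

Lemma gdist_eq x y d : y \in ws x d -> (forall m, y \in ws x m -> d <= m) ->
  gdist adj x y = Some d.
Proof.
move=> Hd Hmin; case: (gdist_Some Hd) => d' Hd'.
have Hle := gdist_min Hd' Hd. have Hge := Hmin _ (gdist_ws Hd').
by rewrite Hd'; congr Some; apply/eqP; rewrite eqn_leq Hle Hge.
Qed.

End Walks.

Lemma ws_hom (V W : finType) (adj : rel V) (adj2 : rel W) (g : V -> W) :
  (forall a b, adj a b -> adj2 (g a) (g b)) ->
  forall m x y, y \in walk_set adj x m -> g y \in walk_set adj2 (g x) m.
Proof.
move=> Hg; elim=> [|m IH] x y.
  by rewrite /= !inE => /eqP ->.
move=> /wsSP [z Hz Hzy]; exact: wsS (IH _ _ Hz) (Hg _ _ Hzy).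
Qed.

Definition bet (T U : Type) (x : T + U) := if x is inl _ then 0 else 1.

Section Gadget.
Variables (nc : nat) (e : rel 'I_nc).
Hypothesis He : simple_graph e.
Local Notation ga := (@gadget_adj nc e).
Local Notation ws := (walk_set ga).

Lemma esym : symmetric e. Proof. by case: He. Qed.
Lemma eirr : irreflexive e. Proof. by case: He. Qed.

Lemma ga_sym : symmetric ga.
Proof. by move=> x y; rewrite /gadget_adj orbC. Qed.

Lemma ga_irr : irreflexive ga.
Proof.
move=> [u|[[[i j] b] H]] //; rewrite /gadget_adj /gadget_half /=.
by case: b {H}; rewrite !andbF.
Qed.

Lemma ga_ll u w : ga (inl u) (inl w) = false.
Proof. by []. Qed.

Lemma ga_orig x : exists a, x = inl a \/ ga (inl a) x.
Proof.
case: x => [u|[[[i j] b] H]]; first by exists u; left.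
case Eij: (e i j).
  case: b H => H.
    by exists j; right; rewrite /gadget_adj /gadget_half /= Eij eqxx.
  by exists i; right; rewrite /gadget_adj /gadget_half /= Eij eqxx.
by exists i; right; rewrite /gadget_adj /gadget_half /= Eij eqxx.
Qed.

Lemma no_short (u w : 'I_nc) : e u w -> ~~ ga (inl u) (inl w) /\
  forall z, ~~ (ga (inl u) z && ga z (inl w)).
Proof.
move=> Euw; split => // -[z|[[[i j] b] H]] //.
rewrite /gadget_adj /gadget_half /= !orbF.
have Hne : u != w by apply: contraTneq Euw => ->; rewrite eirr.
case Eij: (e i j).
  case: b {H} => /=; rewrite ?andbF ?orbF ?andbT;
    apply/negP => /andP [/eqP Hu /eqP Hw]; by rewrite Hu Hw eqxx in Hne.
apply/negP => /andP [Hu Hw].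
move: Hu Hw Hne Euw; case/orP => /eqP -> ; case/orP => /eqP -> //; rewrite ?eqxx //.
  by rewrite Eij.
by rewrite esym Eij.
Qed.

Lemma mid_lt (u w : 'I_nc) (Hlt : u < w) : ~~ e u w -> exists z, ga (inl u) z && ga z (inl w).
Proof.
move=> Hn.
have H : gadget_valid e (u, w, false) by rewrite /= Hlt orbT.
exists (inr (exist _ (u, w, false) H)).
by rewrite /gadget_adj /gadget_half /= (negbTE Hn) !eqxx ?orbT.
Qed.

Lemma mid (u w : 'I_nc) : u != w -> ~~ e u w -> exists z, ga (inl u) z && ga z (inl w).
Proof.
move=> Hne Hn; case: (ltngtP u w) => H.
- exact: mid_lt.
- have Hn' : ~~ e w u by rewrite esym.
  have [z /andP [Hz1 Hz2]] := mid_lt H Hn'.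
  by exists z; rewrite ga_sym Hz2 ga_sym Hz1.
- by move: Hne; rewrite (val_inj H) eqxx.
Qed.

Lemma edge_walk_lt (u w : 'I_nc) (Hlt : u < w) : e u w -> inl w \in ws (inl u) 3.
Proof.
move=> Ew.
have H1 : gadget_valid e (u, w, false) by rewrite /= Hlt orbT.
have H2 : gadget_valid e (u, w, true) by rewrite /= Hlt Ew.
apply: (@wsS _ _ _ _ (inr (exist _ (u, w, true) H2))).
  apply: (@wsS _ _ _ _ (inr (exist _ (u, w, false) H1))).
    apply: (@wsS _ _ _ _ (inl u)); first exact: ws0.
    by rewrite /gadget_adj /gadget_half /= Ew !eqxx.
  by rewrite /gadget_adj /gadget_half /= Ew !eqxx.
by rewrite /gadget_adj /gadget_half /= Ew !eqxx ?orbT.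
Qed.

Lemma edge_walk (u w : 'I_nc) : e u w -> inl w \in ws (inl u) 3.
Proof.
move=> Ew; case: (ltngtP u w) => H.
- exact: edge_walk_lt.
- apply: (ws_sym ga_sym); apply: edge_walk_lt H _; by rewrite esym.
- by move: Ew; rewrite (val_inj H) eirr.
Qed.

Lemma bet_spec x : exists a, inl a \in ws x (bet x).
Proof.
have [a [->|H]] := ga_orig x; first by exists a; exact: ws0.
case: x H => [u|s] H; first by rewrite ga_ll in H.
exists a; apply: wsS (ws0 _ _) _; by rewrite ga_sym.
Qed.

Hypothesis Hc : gconnected e.

Lemma conn_orig u w : exists m, inl w \in ws (inl u) m.
Proof.
have /connectP [p Hp ->] := Hc u w.
elim: p u Hp => [|v p IH] u /=; first by exists 0; exact: ws0.
move=> /andP [Huv Hp]; have [m Hm] := IH _ Hp.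
exists (3 + m); exact: ws_cat (edge_walk Huv) Hm.
Qed.

Lemma conn x y : exists m, y \in ws x m.
Proof.
have [a Ha] := bet_spec x; have [b Hb] := bet_spec y; have [m Hm] := conn_orig a b.
exists (bet x + m + bet y); exact: ws_cat (ws_cat Ha Hm) (ws_sym ga_sym Hb).
Qed.

Definition dg x y := odflt 0 (gdist ga x y).

Lemma dgE x y : gdist ga x y = Some (dg x y).
Proof. have [m Hm] := conn x y; have [d Hd] := gdist_Some Hm; by rewrite /dg Hd. Qed.

Lemma dg_ws x y : y \in ws x (dg x y).
Proof. exact: gdist_ws (dgE x y). Qed.

Lemma dg_min x y m : y \in ws x m -> dg x y <= m.
Proof. exact: gdist_min (dgE x y). Qed.

Lemma dg_lip x y z : ga y z -> dg x z <= (dg x y).+1.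
Proof. move=> H; apply: dg_min; exact: wsS (dg_ws x y) H. Qed.

Lemma dg_tri x y z : dg x z <= dg x y + dg y z.
Proof. apply: dg_min; exact: ws_cat (dg_ws x y) (dg_ws y z). Qed.

Lemma dg_sym x y : dg x y = dg y x.
Proof.
apply/eqP; rewrite eqn_leq; apply/andP; split; apply: dg_min; apply: (ws_sym ga_sym); exact: dg_ws.
Qed.

Lemma dg0 x y : dg x y = 0 -> x = y.
Proof. move=> H; have := dg_ws x y; rewrite H /= inE => /eqP //. Qed.

Lemma dg_xx x : dg x x = 0.
Proof. by apply/eqP; rewrite -leqn0; apply: dg_min; exact: ws0. Qed.

Lemma dg_same a a' : ~~ e a a' -> dg (inl a) (inl a') <= 2.
Proof.
move=> Hn; case: (eqVneq a a') => [->|Hne]; first by rewrite dg_xx.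
have [z /andP [H1 H2]] := mid Hne Hn.
apply: dg_min; apply: wsS _ H2; apply: wsS _ H1; exact: ws0.
Qed.

Lemma dg_orig3 a a' : dg (inl a) (inl a') <= 3.
Proof.
case Ea: (e a a'); first by apply: dg_min; exact: edge_walk.
by apply: leq_trans (dg_same (negbT Ea)) _.
Qed.

Lemma bet_lb x a : bet x <= dg x (inl a).
Proof.
case: x => [u|s] //=; rewrite lt0n; apply/eqP => /dg0 //.
Qed.

Lemma bet_ub x : exists a, dg x (inl a) <= bet x.
Proof. have [a Ha] := bet_spec x; exists a; exact: dg_min. Qed.

End Gadget.

Section Constr.
Variables (nc : nat) (e : rel 'I_nc).
Hypothesis He : simple_graph e.
Hypothesis Hc : gconnected e.
Variables (k : nat) (chi : 'I_nc -> 'I_k).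
Hypothesis Hchi : forall u w, e u w -> chi u != chi w.
Local Notation ga := (@gadget_adj nc e).
Local Notation gv := (gadget_vertex e).
Local Notation GV := (option gv + 'I_k)%type.

Definition Gh (p q : GV) : bool :=
  match p, q with
  | inl (Some y), inl (Some z) => ga y z
  | inl (Some (inl u)), inr t => chi u == t
  | inl None, inr t => true
  | _, _ => false
  end.
Definition Gadj : rel GV := fun p q => Gh p q || Gh q p.

Lemma Gsimple : simple_graph Gadj.
Proof.
split; first by move=> p q; rewrite /Gadj orbC.
move=> [[y|]|t]; rewrite /Gadj /= ?orbb //; case: y => [u|s]; exact: ga_irr.
Qed.

Definition Mx (x : gv) (t : 'I_k) := \max_(a : 'I_nc | chi a == t) ((bet x).+2 - dg x (inl a)).
Definition fx (x : gv) (p : GV) : nat :=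
  match p with
  | inl (Some y) => dg x y
  | inl None => (bet x).+2
  | inr t => (bet x).+3 - Mx x t
  end.

Lemma Mx_ub x t : Mx x t <= 2.
Proof.
apply/bigmax_leqP => a _; have := bet_lb He Hc x a; move: (dg x (inl a)) (bet x) => d b0; lia.
Qed.

Lemma fx_lip x p q : Gh p q -> fx x q <= (fx x p).+1 /\ fx x p <= (fx x q).+1.
Proof.
case: p => [[y|]|t]; case: q => [[z|]|t'] //=.
- move=> H; have {}H : ga y z by case: y H.
  split; [exact: (dg_lip He Hc) | by apply: (dg_lip He Hc); rewrite ga_sym].
- by case: y.
- case: y => // u /eqP <-.
  split.
    have Hq := @leq_bigmax_cond _ (fun a => chi a == chi u) (fun a => (bet x).+2 - dg x (inl a)) u (eqxx _).
    rewrite -/(Mx x (chi u)) in Hq; move: Hq; move: (dg x (inl u)) (Mx x (chi u)) (bet x) => d M b; lia.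
  have Hm := Mx_ub x (chi u).
  have [a0 Ha0] := bet_ub He Hc x.
  have H3 := dg_tri He Hc x (inl a0) (inl u).
  have H4 := dg_orig3 He Hc a0 u.
  have Hb : Mx x (chi u) <= (bet x).+4 - dg x (inl u).
    apply/bigmax_leqP => a /eqP Ha.
    have H5 := dg_tri He Hc x (inl a) (inl u).
    have H6 : dg (inl a : gv) (inl u) <= 2.
      apply: (dg_same He Hc); apply: contraT; rewrite negbK => /Hchi.
      by rewrite Ha eqxx.
    move: H3 H4 H5 H6 Ha0; move: (dg x (inl a)) (dg x (inl u)) (dg x (inl a0)) (dg (inl a0 : gv) (inl u)) (dg (inl a : gv) (inl u)) (bet x) => ? ? ? ? ? ?; lia.
  simpl; move: Hm Hb H3 H4 Ha0; move: (dg x (inl u)) (dg x (inl a0)) (dg (inl a0 : gv) (inl u)) (Mx x (chi u)) (bet x) => ? ? ? ? ?; lia.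
- move=> _; have := Mx_ub x t'; move: (Mx x t') (bet x) => ? ?; split; lia.
Qed.

Definition fn (p : GV) : nat := match p with
 | inl None => 0 | inr _ => 1 | inl (Some (inl _)) => 2 | inl (Some (inr _)) => 3 end.

Lemma fn_lip p q : Gh p q -> fn q <= (fn p).+1 /\ fn p <= (fn q).+1.
Proof.
by case: p => [[[u|s]|]|t]; case: q => [[[u'|s']|]|t'].
Qed.

Lemma pot_Gadj (f : GV -> nat) : (forall p q, Gh p q -> f q <= (f p).+1 /\ f p <= (f q).+1) ->
  forall p q, Gadj p q -> f q <= (f p).+1.
Proof. by move=> H p q /orP [/H [] | /H []]. Qed.

Lemma Gdist p q : gdist Gadj (inl p) (inl q) = Some (gadget_matrix p q).
Proof.
have hom : forall m x y, y \in walk_set ga x m ->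
    (inl (Some y) : GV) \in walk_set Gadj (inl (Some x)) m.
  move=> m x y; apply: (@ws_hom _ _ ga Gadj (fun z => inl (Some z))) => a b H.
  by case: a H => [?|?] H; rewrite /Gadj /= H.
case: p => [x|]; case: q => [y|].
- have -> : gadget_matrix (Some x) (Some y) = dg x y by case: x.
  apply: gdist_eq; first exact: (hom _ _ _ (dg_ws He Hc x y)).
  move=> m Hm.
  exact: (@ws_pot _ Gadj (fx x) (inl (Some x)) (dg_xx He Hc x) (pot_Gadj (fx_lip x)) m _ Hm).
- have -> : gadget_matrix (Some x) None = (bet x).+2 by case: x.
  apply: gdist_eq.
    have [a Ha] := bet_spec x.
    apply: (@wsS _ _ _ _ (inr (chi a))); last by [].
    apply: (@wsS _ _ _ _ (inl (Some (inl a)))); first exact: (hom _ _ _ Ha).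
    by rewrite /Gadj /= eqxx.
  move=> m Hm.
  exact: (@ws_pot _ Gadj (fx x) (inl (Some x)) (dg_xx He Hc x) (pot_Gadj (fx_lip x)) m _ Hm).
- have -> : gadget_matrix None (Some y) = (bet y).+2 by case: y.
  apply: gdist_eq.
    have [a Ha] := bet_spec y.
    have H2 : (inl (Some (inl a)) : GV) \in walk_set Gadj (inl None) 2.
      apply: (@wsS _ _ _ _ (inr (chi a))); last by rewrite /Gadj /= eqxx.
      apply: (@wsS _ _ _ _ (inl None)); [exact: ws0 | by []].
    exact: (ws_cat H2 (hom _ _ _ (ws_sym (ga_sym (e:=e)) Ha))).
  move=> m Hm.
  have := (@ws_pot _ Gadj fn (inl None) erefl (pot_Gadj fn_lip) m _ Hm).
  by case: y Hm.
- apply: gdist_eq; first exact: ws0.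
  by [].
Qed.

End Constr.

Theorem mainTheorem2 (k nc : nat) (e : rel 'I_nc) :
  simple_graph e -> gconnected e ->
  colourable e k <->
  exists (V : finType) (adj : rel V) (Phi : option (gadget_vertex e) -> V),
    realises (gadget_matrix (e:=e)) adj Phi /\
    (#|V| <= #|{: option (gadget_vertex e)}| + k)%N.
Proof.
move=> He Hc; split.
- move=> [chi Hchi].
  exists (option (gadget_vertex e) + 'I_k)%type, (@Gadj nc e k chi), inl.
  split; last by rewrite card_sum card_ord.
  split; first exact: Gsimple.
  split; first by move=> ? ? [].
  move=> p q. have := Gdist He Hc Hchi p q. move=> H. exact H.
- move=> [V [adj [Phi [[Hs [Hinj Hd]] Hcard]]]].
  have Hirr : irreflexive adj by case: Hs.
  have Hsym : symmetric adj by case: Hs.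
  have Hmid : forall u : 'I_nc, exists m, adj (Phi None) m && adj m (Phi (Some (inl u))).
    move=> u; have := gdist_ws (Hd None (Some (inl u))).
    move=> /wsSP [z /wsSP [y Hy Hyz] Hz].
    by move: Hy Hyz; rewrite inE => /eqP -> Hyz; exists z; rewrite Hyz.
  pose mu u := odflt (Phi None) [pick m | adj (Phi None) m && adj m (Phi (Some (inl u)))].
  have Hmu : forall u, adj (Phi None) (mu u) && adj (mu u) (Phi (Some (inl u))).
    move=> u; rewrite /mu; case: pickP => //= H; have [m Hm] := Hmid u; by rewrite H in Hm.
  pose A := [set v | v \notin codom Phi].
  have HA : forall u, mu u \in A.
    move=> u; rewrite inE; apply/negP => /codomP [p Hp].
    have /andP [H1 _] := Hmu u. rewrite Hp in H1.
    have Hw : Phi p \in walk_set adj (Phi None) 1 by apply: wsS (ws0 _ _) H1.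
    have := gdist_min (Hd None p) Hw.
    by case: p Hp H1 {Hw} => [[x|x]|] //= _; rewrite Hirr.
  have HcardA : #|A| <= k.
    pose B := [set v in codom Phi].
    have H1 := cardsC B.
    have H2 : #|A| = #|~: B| by apply: eq_card => v; rewrite !inE.
    have H3 : #|B| = #|{: option (gadget_vertex e)}|.
      by rewrite -(card_codom Hinj); apply: eq_card => v; rewrite inE.
    lia.
  have Hidx : forall u, index (mu u) (enum A) < k.
    move=> u; apply: leq_trans HcardA; by rewrite cardE index_mem mem_enum HA.
  exists (fun u => Ordinal (Hidx u)) => u w Euw.
  apply/negP => /eqP /(congr1 val) /= Hi.
  have Hm : mu u = mu w.
    by rewrite -(nth_index (Phi None) (_ : mu u \in enum A)) ?mem_enum // Hi nth_index // mem_enum.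
  have H2 : Phi (Some (inl w)) \in walk_set adj (Phi (Some (inl u))) 2.
    apply: (@wsS _ _ _ _ (mu u)).
      apply: wsS (ws0 _ _) _; rewrite Hsym; by case/andP: (Hmu u).
    by rewrite Hm; case/andP: (Hmu w).
  have Hle := gdist_min (Hd (Some (inl u)) (Some (inl w))) H2.
  have Hne : u != w by apply: contraTneq Euw => ->; rewrite (eirr He).
  have Hn0 : gadget_matrix (e:=e) (Some (inl u)) (Some (inl w)) != 0.
    apply/eqP => H0; have := gdist_ws (Hd (Some (inl u)) (Some (inl w))).
    rewrite H0 /= inE => /eqP /Hinj [] Hwu; by rewrite Hwu eqxx in Hne.
  have [Ns1 Ns2] := no_short He Euw.
  move: Hle Hn0; rewrite /=.
  case Eg: (gdist _ (inl u) (inl w)) => [d|] //= Hle Hn0.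
  have Hw := gdist_ws Eg.
  have : d = 1 \/ d = 2 by lia.
  case=> Ed; rewrite Ed in Hw.
    move/wsSP: Hw => [y]; rewrite /= inE => /eqP ->; by rewrite (negbTE Ns1).
  move/wsSP: Hw => [z /wsSP [y]]; rewrite /= inE => /eqP -> H1 H3.
  by have := Ns2 z; rewrite H1 H3.
Qed.
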